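(* Let $N$ be an even integer. Then: (1) if $N \geq 6$, $f(N,\frac{N}{2}) = \frac{N^2}{4}+3$; (2) if $N \geq 10$, $f(N,\frac{N}{2}+1) > f(N,\frac{N}{2})$.
   Context: All graphs are finite and simple; $L(G)$ is the line graph of $G$; $e(\cdot)$, $\Delta(\cdot)$, $\delta(\cdot)$ denote number of edges, maximum degree and minimum degree. For integers $N \ge \Delta \ge 1$, $f(N,\Delta) = \max\{ e(L(G)) : e(G)=N, \Delta(G)=\Delta, \delta(G)\geq 1\}$, the maximum over all simple graphs $G$. *)

(* Defs.v *)
From mathcomp Require Import all_boot.
Set Implicit Arguments. Unset Strict Implicit. Unset Printing Implicit Defensive.

Definition simple_graph (T : finType) (e : rel T) : Prop :=
  symmetric e /\ irreflexive e.

Definition edges (T : finType) (e : rel T) : {set {set T}} :=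
  [set A : {set T} | [exists u, exists v, e u v && (A == [set u; v])]].

Definition num_edges (T : finType) (e : rel T) : nat := #|edges e|.

Definition deg (T : finType) (e : rel T) (v : T) : nat := #|[set u | e v u]|.

Definition max_deg (T : finType) (e : rel T) : nat := \max_(v : T) deg e v.

Definition min_deg_ge1 (T : finType) (e : rel T) : Prop := forall v : T, 0 < deg e v.

(* e(L(G)): the number of edges of the line graph, i.e. of unordered pairs
   of distinct edges of G sharing a common endpoint. *)
Definition line_graph_edges (T : finType) (e : rel T) : nat :=
  #|[set P : {set {set T}} | [&& P \subset edges e, #|P| == 2 &
        [exists v, [forall A in P, v \in A]]]]|.

Definition admissible (N D : nat) (T : finType) (e : rel T) : Prop :=
  [/\ simple_graph e, num_edges e = N, max_deg e = D & min_deg_ge1 e].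

(* m = f(N, D): m is the maximum of e(L(G)) over all admissible G
   (attained, and an upper bound). *)
Definition is_f (N D m : nat) : Prop :=
  (exists (T : finType) (e : rel T), admissible N D e /\ line_graph_edges e = m) /\
  (forall (T : finType) (e : rel T), admissible N D e -> line_graph_edges e <= m).

(* Main.v *)
Require Import Defs.
From mathcomp Require Import all_boot.
From mathcomp Require Import zify.
From Stdlib Require Import Classical.
Set Implicit Arguments. Unset Strict Implicit. Unset Printing Implicit Defensive.

Lemma in_edges (T : finType) (e : rel T) A :
  reflect (exists u v, e u v /\ A = [set u; v]) (A \in edges e).
Proof.
rewrite inE; apply: (iffP existsP).
  by case=> u /existsP [v /andP [h /eqP ->]]; exists u, v.
by case=> u [v [h ->]]; exists u; apply/existsP; exists v; rewrite h eqxx.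
Qed.

Definition Ev (T : finType) (e : rel T) v := [set A in edges e | v \in A].

Lemma inEv (T : finType) (e : rel T) v A :
  (A \in Ev e v) = (A \in edges e) && (v \in A).
Proof. by rewrite /Ev in_set. Qed.

Lemma two_set (T : finType) (A : {set T}) v w :
  #|A| = 2 -> v \in A -> w \in A -> v != w -> A = [set v; w].
Proof.
move=> hA hv hw hvw; apply/eqP; rewrite eq_sym eqEcard cards2 hvw hA andbT.
by apply/subsetP => x; rewrite !inE => /orP [/eqP ->|/eqP ->].
Qed.

Lemma edge_card2 (T : finType) (e : rel T) A :
  simple_graph e -> A \in edges e -> #|A| = 2.
Proof.
move=> [hs hi] /in_edges [u [v [huv ->]]]; rewrite cards2.
by case: eqP huv => // ->; rewrite hi.
Qed.

Lemma Ev_deg (T : finType) (e : rel T) v :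
  simple_graph e -> #|Ev e v| = deg e v.
Proof.
move=> [hs hi].
have -> : Ev e v = (fun u => [set v; u]) @: [set u | e v u].
  apply/setP => A; apply/idP/idP.
    rewrite inE => /andP [/in_edges [x [y [hxy ->]]]].
    rewrite !inE => /orP [/eqP ->|/eqP ->].
      by apply/imsetP; exists y; rewrite ?inE.
    by apply/imsetP; exists x; rewrite ?inE 1?hs // setUC.
  case/imsetP => u; rewrite inE => huv ->; rewrite inE set21 andbT.
  by apply/in_edges; exists v, u.
rewrite card_in_imset // => u1 u2; rewrite !inE => h1 h2 heq.
have : u1 \in [set v; u2] by rewrite -heq set22.
rewrite !inE => /orP [/eqP h|/eqP //].
by move: h1; rewrite -h hi.
Qed.

Lemma card_sum (T : finType) (S : {set T}) (P : pred T) :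
  #|[set x in S | P x]| = \sum_(x in S) P x.
Proof.
rewrite -sum1_card big_mkcond [RHS]big_mkcond /=; apply: eq_bigr => x _.
by rewrite !inE; case: (x \in S); case: (P x).
Qed.

Lemma handshake (T : finType) (e : rel T) :
  simple_graph e -> \sum_v deg e v = 2 * num_edges e.
Proof.
move=> hg.
transitivity (\sum_v \sum_(A in edges e) (v \in A)).
  by apply: eq_bigr => v _; rewrite -Ev_deg // /Ev card_sum.
rewrite exchange_big /=.
transitivity (\sum_(A in edges e) 2).
  apply: eq_bigr => A hA; rewrite -(edge_card2 hg hA) -sum1_card [RHS]big_mkcond /=.
  by apply: eq_bigr => x _; case: (x \in A).
by rewrite sum_nat_const mulnC.
Qed.

Lemma lge_le (T : finType) (e : rel T) :
  line_graph_edges e <= 'C(num_edges e, 2).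
Proof.
rewrite /line_graph_edges /num_edges -cards_draws; apply: subset_leq_card.
by apply/subsetP => P; rewrite !inE => /and3P [h1 h2 _]; rewrite h1 h2.
Qed.

Lemma lge_sum (T : finType) (e : rel T) :
  simple_graph e -> line_graph_edges e = \sum_v 'C(deg e v, 2).
Proof.
move=> hg.
transitivity (\sum_v \sum_(P : {set {set T}}) ((P \subset Ev e v) && (#|P| == 2))); last first.
  apply: eq_bigr => v _; rewrite -Ev_deg // -cards_draws -sum1_card [RHS]big_mkcond /=.
  by apply: eq_bigr => P _; rewrite !inE; case: (_ && _).
rewrite exchange_big /= /line_graph_edges -sum1_card big_mkcond /=.
apply: eq_bigr => P _.
case h2: (#|P| == 2); last first.
  by rewrite inE h2 andbF big1 // => v _; rewrite andbF.
under eq_bigr do rewrite andbT.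
have -> : \sum_v (P \subset Ev e v) = #|[set v | P \subset Ev e v]|.
  by rewrite -sum1_card [RHS]big_mkcond /=; apply: eq_bigr => v _; rewrite inE; case: (_ \subset _).
have h2c := h2.
case/cards2P: h2 => A [B [hAB hP]].
have le1 : #|[set v | P \subset Ev e v]| <= 1.
  apply/card_le1_eqP => v w; rewrite !in_set hP !subUset !sub1set !inEv.
  move=> /andP [/andP [hA hvA] /andP [hB hvB]] /andP [/andP [_ hwA] /andP [_ hwB]].
  apply/eqP; apply/negP => /negP; rewrite eq_sym => hvw; move: hAB.
  rewrite (two_set (edge_card2 hg hA) hvA hwA hvw) (two_set (edge_card2 hg hB) hvB hwB hvw).
  by rewrite eqxx.
rewrite inE h2c /=.
case hL: (_ && _).
  case/andP: hL => hsub /existsP [v /forallP hv].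
  apply/eqP; rewrite eqn_leq le1 andbT card_gt0; apply/set0Pn; exists v.
  rewrite inE; apply/subsetP => X hX; rewrite inE (subsetP hsub X hX).
  by have := hv X; rewrite hX.
apply/esym/eqP; rewrite cards_eq0; apply/eqP/setP => v; rewrite in_set in_set0.
apply/negbTE/negP => hv; move: hL; rewrite (subset_trans hv) /=; last first.
  by apply/subsetP => X; rewrite inEv => /andP [].
move/negbT/negP; apply; apply/existsP; exists v; apply/forallP => X; apply/implyP => hX.
by have := subsetP hv X hX; rewrite inEv => /andP [].
Qed.

Definition del (T : finType) (e : rel T) (a : T) : rel T :=
  fun u v => [&& e u v, u != a & v != a].

Definition Pc (T : finType) (e : rel T) := \sum_v 'C(deg e v, 2).

Lemma C2E n : 'C(n, 2) * 2 = n * (n - 1).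
Proof. elim: n => // n IH; rewrite binS bin1; nia. Qed.

Lemma del_simple (T : finType) (e : rel T) a :
  simple_graph e -> simple_graph (del e a).
Proof.
move=> [hs hi]; split.
  by move=> u v; rewrite /del hs [(u != a) && _]andbC.
by move=> u; rewrite /del hi.
Qed.

Lemma deg_le_a (T : finType) (e : rel T) v a : e v a <= deg e v.
Proof.
by rewrite /deg (cardsD1 a) inE; case: (e v a).
Qed.

Lemma deg_del (T : finType) (e : rel T) a v :
  deg (del e a) v = if v == a then 0 else deg e v - e v a.
Proof.
rewrite /deg; case: eqP => [->|/eqP hva].
  apply/eqP; rewrite cards_eq0; apply/eqP/setP => u.
  by rewrite !inE /del eqxx andbF.
have -> : [set u | del e a v u] = [set u | e v u] :\ a.
  by apply/setP => u; rewrite !inE /del hva /= andbC.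
rewrite [#|[set u | e v u]|](cardsD1 a) inE; case: (e v a) => /=; lia.
Qed.

Lemma sum_adj (T : finType) (e : rel T) a :
  simple_graph e -> \sum_v e v a = deg e a.
Proof.
move=> [hs hi]; rewrite /deg -sum1_card [RHS]big_mkcond /=.
by apply: eq_bigr => v _; rewrite inE hs; case: (e a v).
Qed.

Lemma edges_del (T : finType) (e : rel T) a :
  simple_graph e -> num_edges (del e a) = num_edges e - deg e a.
Proof.
move=> hg.
have h1 := handshake hg; have h2 := handshake (del_simple a hg).
have h3 : \sum_v deg e v = \sum_v deg (del e a) v + \sum_v (if v == a then deg e a else e v a).
  rewrite -big_split /=; apply: eq_bigr => v _; rewrite deg_del.
  case: eqP => [->|_] //; have := deg_le_a e v a; lia.
have h4 : \sum_v (if v == a then deg e a else e v a) = 2 * deg e a.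
  rewrite (bigD1 a) //= eqxx.
  have : \sum_(v | v != a) (if v == a then deg e a else e v a) = \sum_v e v a.
    rewrite [RHS](bigD1 a) //=; case: hg => _ hi; rewrite hi add0n.
    by apply: eq_bigr => v /negbTE ->.
  move=> ->; rewrite sum_adj //; lia.
lia.
Qed.

Lemma Pc_del (T : finType) (e : rel T) a :
  simple_graph e ->
  Pc e = 'C(deg e a, 2) + Pc (del e a) + \sum_v e a v * deg (del e a) v.
Proof.
move=> [hs hi].
have h : forall v, 'C(deg e v, 2) = (if v == a then 'C(deg e a, 2) else 0)
          + 'C(deg (del e a) v, 2) + e a v * deg (del e a) v.
  move=> v; rewrite deg_del; case: eqP => [->|/eqP hva]; first by rewrite muln0 addn0 bin0n addn0.
  have := deg_le_a e v a; rewrite hs.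
  case: (e a v) => /= hle; last by rewrite subn0; lia.
  move: hle; case: (deg e v) => // n _; rewrite subn1 /= binS bin1; lia.
rewrite /Pc (eq_bigr _ (fun v _ => h v)) !big_split /=; congr (_ + _ + _).
rewrite (bigD1 a) //= eqxx big1 ?addn0 // => v /negbTE -> //.
Qed.

Lemma Pc_bound (T : finType) (e : rel T) D :
  simple_graph e -> (forall v, deg e v <= D) -> Pc e * 2 <= (D - 1) * (2 * num_edges e).
Proof.
move=> hg hD; rewrite -handshake // /Pc big_distrl /= big_distrr /=.
apply: leq_sum => v _; rewrite C2E; have := hD v; nia.
Qed.

Lemma Pc_le (T : finType) (e : rel T) :
  simple_graph e -> Pc e <= 'C(num_edges e, 2).
Proof. by move=> hg; rewrite /Pc -lge_sum // lge_le. Qed.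
Lemma arith (k h S PH PHb S' ck ch ckh : nat) (s : bool) :
  3 <= k -> h <= k -> ck * 2 = k * (k - 1) -> ch * 2 = h * (h - 1) ->
  ckh * 2 = (k - h) * (k - h - 1) ->
  PH = ch + PHb + S' -> S' <= 2 * (k - h) -> PHb <= ckh ->
  PH * 2 <= (h - 1) * (2 * k) ->
  (s -> h <= k - 1 /\ S <= 2 * k) -> (~~ s -> S + h <= 2 * k) ->
  ck + PH + S <= k ^ 2 + 3.
Proof.
move=> hk hhk Ck Ch Ckh hPH hS' hPHb hPH2 hs1 hs2.
have hS : S <= 2 * k by case: s hs1 hs2 => [/(_ isT) []|_ /(_ isT)]; lia.
have [h2|h3] := leqP h 2.
  have : (h - 1) * (2 * k) <= 1 * (2 * k) by apply: leq_mul => //; lia.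
  move=> hm.
  have [r hr] : exists r, k = r + 3 by exists (k - 3); lia.
  subst k; move: Ck; rewrite (_ : r + 3 - 1 = r + 2); last lia.
  rewrite expnS expn1 !mulnDl !mulnDr => Ck. timeout 30 lia.
have [p hp] : exists p, h = p + 3 by exists (h - 3); lia.
subst h.
case: s hs1 hs2 => [/(_ isT) [hh _] _|_ /(_ isT) hb].
  have [q hq] : exists q, k = p + 4 + q by exists (k - p - 4); lia.
  subst k.
  move: Ck Ch Ckh; rewrite (_ : p + 4 + q - 1 = p + q + 3); last lia.
  rewrite (_ : p + 3 - 1 = p + 2); last lia.
  rewrite (_ : p + 4 + q - (p + 3) = q + 1); last lia.
  rewrite (_ : q + 1 - 1 = q); last lia.
  rewrite expnS expn1 !mulnDl !mulnDr => Ck Ch Ckh.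
  timeout 30 lia.
have [q hq] : exists q, k = p + 3 + q by exists (k - p - 3); lia.
subst k.
move: Ck Ch Ckh; rewrite (_ : p + 3 + q - 1 = p + q + 2); last lia.
rewrite (_ : p + 3 - 1 = p + 2); last lia.
rewrite (_ : p + 3 + q - (p + 3) = q); last lia.
have [hq0|[r hr]] : q = 0 \/ exists r, q = r + 1 by case: (posnP q) => hq0; [left|right; exists (q - 1); lia].
  subst q; rewrite expnS expn1 !mulnDl !mulnDr => Ck Ch Ckh; timeout 30 lia.
subst q; rewrite (_ : r + 1 - 1 = r); last lia.
rewrite expnS expn1 !mulnDl !mulnDr => Ck Ch Ckh; timeout 30 lia.
Qed.

Lemma upper (T : finType) (e : rel T) k :
  3 <= k -> admissible (2 * k) k e -> line_graph_edges e <= k ^ 2 + 3.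
Proof.
move=> hk [hg hm hmax _].
have hle : forall v, deg e v <= k by move=> v; rewrite -hmax; apply: leq_bigmax.
have [a ha] : exists a, deg e a = k.
  case: (pickP (fun _ : T => true)) => [a0 _|h0].
    exists [arg max_(i > a0) deg e i]; rewrite -hmax /max_deg.
    by rewrite (bigmax_eq_arg a0).
  by move: hmax; rewrite /max_deg big_pred0 // => hk0; move: hk; rewrite -hk0.
set H := del e a.
have hgH : simple_graph H := del_simple a hg.
have hmH : num_edges H = k by rewrite /H edges_del // hm ha; lia.
case: (@arg_maxnP _ a xpredT (deg H) isT) => b _ hb.
set h := deg H b.
set Hb := del H b.
have hgHb : simple_graph Hb := del_simple b hgH.
have hmHb : num_edges Hb = k - h by rewrite /Hb edges_del // hmH.
rewrite lge_sum // -/(Pc e) (Pc_del a hg) ha -/H.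
apply: (@arith k h _ (Pc H) (Pc Hb) (\sum_v H b v * deg Hb v) _ 'C(h, 2) 'C(k - h, 2) (e a b)) => //.
- by rewrite /h /H deg_del; case: eqP => [_|_]; [lia|]; have := hle b; lia.
- by rewrite C2E.
- by rewrite C2E.
- by rewrite C2E.
- by rewrite (Pc_del b hgH).
- apply: (@leq_trans (\sum_v deg Hb v)); first by apply: leq_sum => v _; case: (H b v); lia.
  by rewrite handshake // hmHb.
- by rewrite -hmHb Pc_le.
- by rewrite -hmH; apply: Pc_bound => // v; apply: hb.
- move=> hab; split.
    have [hs hi] := hg.
    have hba : b != a by apply/eqP => hba; move: hab; rewrite hba hi.
    rewrite /h /H deg_del (negbTE hba) hs hab; have := hle b; lia.
  apply: (@leq_trans (\sum_v deg H v)); first by apply: leq_sum => v _; case: (e a v); lia.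
  by rewrite handshake // hmH.
- move=> hab; rewrite -hmH -handshake //.
  have -> : \sum_v deg H v = \sum_v (e a v * deg H v + (~~ e a v) * deg H v).
    by apply: eq_bigr => v _; case: (e a v); lia.
  rewrite big_split /= leq_add2l (bigD1 b) //= hab mul1n; lia.
Qed.

Definition orel n (R : nat -> nat -> bool) : rel 'I_n := fun u v => R u v.
Arguments orel : clear implicits.

Lemma orel_simple n (R : nat -> nat -> bool) : (forall u v, R u v = R v u) -> (forall u, R u u = false) ->
  simple_graph (orel n R).
Proof. by move=> hs hi; split => [u v|u]; rewrite /orel. Qed.

Lemma sum_ord n (F : nat -> nat) : \sum_(v : 'I_n) F v = \sum_(0 <= i < n) F i.
Proof. by rewrite big_mkord. Qed.

Lemma deg_orel n (R : nat -> nat -> bool) (v : 'I_n) : deg (orel n R) v = \sum_(0 <= u < n) R v u.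
Proof.
rewrite /deg -sum_ord -sum1_card [LHS]big_mkcond /=.
by apply: eq_bigr => u _; rewrite inE /orel; case: (R v u).
Qed.

Definition degn n (R : nat -> nat -> bool) i := \sum_(0 <= u < n) R i u.

Lemma max_orel n (R : nat -> nat -> bool) M : (forall i, i < n -> \sum_(0 <= u < n) R i u <= M) ->
  (exists2 i, i < n & \sum_(0 <= u < n) R i u = M) -> max_deg (orel n R) = M.
Proof.
move=> hle [i hi hM]; apply/eqP; rewrite eqn_leq; apply/andP; split.
  by apply/bigmax_leqP => v _; rewrite deg_orel; apply: hle.
by rewrite -hM -(deg_orel R (Ordinal hi)); apply: leq_bigmax.
Qed.

Definition S1 (u v : nat) : bool := (u <= 1) || ((u == 2) && (v == 3)).
Definition R1 (u v : nat) : bool := (u != v) && (S1 u v || S1 v u).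

Lemma D1 j i : \sum_(0 <= u < j.+4) R1 i u =
  if i < 2 then j + 3 else if i < 4 then 3 else 2.
Proof.
rewrite (@big_cat_nat _ _ _ 4) //=.
rewrite (@eq_big_nat _ _ _ 4 j.+4 _ (fun _ => nat_of_bool (i <= 1))); last first.
  move=> u /andP [hu _]; case: u hu => [|[|[|[|u]]]] // _.
  by rewrite /R1 /S1; case: i => [|[|[|[|i]]]] //=; rewrite ?andbF.
rewrite /= sum_nat_const_nat !big_nat_recl // big_geq // addn0.
by case: i => [|[|[|[|i]]]] /=; rewrite /R1 /S1 /=; lia.
Qed.

Lemma P1 j : \sum_(0 <= i < j.+4) 'C(\sum_(0 <= u < j.+4) R1 i u, 2) = (j + 3) ^ 2 + 3.
Proof.
under eq_bigr do rewrite D1.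
rewrite (@big_cat_nat _ _ _ 4) //=.
rewrite (@eq_big_nat _ _ _ 4 j.+4 _ (fun _ => 1)); last first.
  by move=> u /andP [hu _]; case: u hu => [|[|[|[|u]]]].
rewrite /= sum_nat_const_nat !big_nat_recl // big_geq // addn0 /=.
rewrite (_ : 'C(3, 2) = 3) //; have := C2E (j + 3); nia.
Qed.

Lemma deg1_sum j : \sum_(0 <= i < j.+4) \sum_(0 <= u < j.+4) R1 i u = 4 * (j + 3).
Proof.
under eq_bigr do rewrite D1.
rewrite (@big_cat_nat _ _ _ 4) //=.
rewrite (@eq_big_nat _ _ _ 4 j.+4 _ (fun _ => 2)); last first.
  by move=> u /andP [hu _]; case: u hu => [|[|[|[|u]]]].
rewrite /= sum_nat_const_nat !big_nat_recl // big_geq // addn0 /=; lia.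
Qed.

Definition S2 (u v : nat) : bool := (u == 0) || ((u == 1) && (v != 2)).
Definition R2 (u v : nat) : bool := (u != v) && (S2 u v || S2 v u).

Lemma D2 j i : \sum_(0 <= u < j.+3) R2 i u =
  if i == 0 then j + 2 else if i == 1 then j + 1 else if i == 2 then 1 else 2.
Proof.
rewrite (@big_cat_nat _ _ _ 3) //=.
rewrite (@eq_big_nat _ _ _ 3 j.+3 _ (fun _ => nat_of_bool (i <= 1))); last first.
  move=> u /andP [hu _]; case: u hu => [|[|[|u]]] // _.
  by rewrite /R2 /S2; case: i => [|[|[|i]]] //=; rewrite ?andbF.
rewrite /= sum_nat_const_nat !big_nat_recl // big_geq // addn0.
by case: i => [|[|[|i]]] /=; rewrite /R2 /S2 /=; lia.
Qed.

Lemma P2 j : \sum_(0 <= i < j.+3) 'C(\sum_(0 <= u < j.+3) R2 i u, 2) =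
  'C(j + 2, 2) + 'C(j + 1, 2) + j.
Proof.
under eq_bigr do rewrite D2.
rewrite (@big_cat_nat _ _ _ 3) //=.
rewrite (@eq_big_nat _ _ _ 3 j.+3 _ (fun _ => 1)); last first.
  by move=> u /andP [hu _]; case: u hu => [|[|[|u]]].
rewrite /= sum_nat_const_nat !big_nat_recl // big_geq // addn0 /=.
rewrite (_ : 'C(1, 2) = 0) //; lia.
Qed.

Lemma deg2_sum j : \sum_(0 <= i < j.+3) \sum_(0 <= u < j.+3) R2 i u = 4 * (j + 1).
Proof.
under eq_bigr do rewrite D2.
rewrite (@big_cat_nat _ _ _ 3) //=.
rewrite (@eq_big_nat _ _ _ 3 j.+3 _ (fun _ => 2)); last first.
  by move=> u /andP [hu _]; case: u hu => [|[|[|u]]].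
rewrite /= sum_nat_const_nat !big_nat_recl // big_geq // addn0 /=; lia.
Qed.

Lemma graph1 k : 3 <= k ->
  exists (T : finType) (e : rel T), admissible (2 * k) k e /\ line_graph_edges e = k ^ 2 + 3.
Proof.
move=> hk; have [j ->] : exists j, k = j + 3 by exists (k - 3); lia.
have hg : simple_graph (orel j.+4 R1).
  apply: orel_simple => [u v|u]; last by rewrite /R1 eqxx.
  by rewrite /R1 eq_sym orbC.
exists _, (orel j.+4 R1); split; last first.
  by rewrite lge_sum // (eq_bigr _ (fun v _ => congr1 (fun x => 'C(x, 2)) (deg_orel R1 v))) /= (sum_ord _ (fun i => 'C(degn j.+4 R1 i, 2))) P1.
split => //.
- have := handshake hg; rewrite (eq_bigr _ (fun v _ => deg_orel R1 v)) /= (sum_ord _ (degn j.+4 R1)) deg1_sum; lia.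
- apply: max_orel => [i _|]; first by rewrite D1; case: ifP => _; [|case: ifP]; lia.
  by exists 0 => //; rewrite D1.
- by move=> v; rewrite deg_orel D1; case: ifP => _; [|case: ifP]; lia.
Qed.

Lemma graph2 k : 5 <= k ->
  exists (T : finType) (e : rel T), admissible (2 * k) k.+1 e /\ k ^ 2 + 3 < line_graph_edges e.
Proof.
move=> hk; have [j hj] : exists j, k = j + 1 by exists (k - 1); lia.
subst k.
have hg : simple_graph (orel j.+3 R2).
  apply: orel_simple => [u v|u]; last by rewrite /R2 eqxx.
  by rewrite /R2 eq_sym orbC.
exists _, (orel j.+3 R2); split; last first.
  rewrite lge_sum // (eq_bigr _ (fun v _ => congr1 (fun x => 'C(x, 2)) (deg_orel R2 v))) /= (sum_ord _ (fun i => 'C(degn j.+3 R2 i, 2))) P2.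
  have h1 : 'C(j + 2, 2) * 2 = (j + 2) * (j + 1) by rewrite C2E; congr (_ * _); lia.
  have h2 : 'C(j + 1, 2) * 2 = (j + 1) * j by rewrite C2E addnK.
  rewrite expnS expn1; nia.
split => //.
- have := handshake hg; rewrite (eq_bigr _ (fun v _ => deg_orel R2 v)) /= (sum_ord _ (degn j.+3 R2)) deg2_sum; lia.
- apply: max_orel => [i _|]; first by rewrite D2; case: ifP => _; [|case: ifP => _; [|case: ifP]]; lia.
  by exists 0 => //; rewrite D2 /=; lia.
- by move=> v; rewrite deg_orel D2; case: ifP => _; [|case: ifP => _; [|case: ifP]]; lia.
Qed.
Lemma max_exists (B : nat) (S : nat -> Prop) :
  (forall m, S m -> m <= B) -> (exists m, S m) ->
  exists m, S m /\ forall m', S m' -> m' <= m.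
Proof.
elim: B => [|B IH] hB hex.
  case: hex => m hm; exists m; split => // m' hm'.
  by have := hB m' hm'; have := hB m hm; lia.
case: (classic (S B.+1)) => hS.
  by exists B.+1; split => // m' /hB.
apply: IH => // m hm; have := hB m hm; rewrite leq_eqVlt => /orP [/eqP hm1|//].
by move: hm; rewrite hm1.
Qed.

Lemma is_f_exists N D :
  (exists (T : finType) (e : rel T), admissible N D e) -> exists m, is_f N D m.
Proof.
move=> [T [e he]].
have := @max_exists 'C(N, 2)
  (fun m => exists (T : finType) (e : rel T), admissible N D e /\ line_graph_edges e = m).
case.
- move=> m [T' [e' [[_ hm _ _] <-]]]; rewrite -hm; exact: lge_le.
- by exists (line_graph_edges e), T, e.
move=> m [hS hmax]; exists m; split => // T' e' he'.
by apply: hmax; exists T', e'.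
Qed.

Theorem mainTheorem14 (N : nat) (hN : ~~ odd N) :
  (6 <= N -> is_f N N./2 (N ^ 2 %/ 4 + 3)) /\
  (10 <= N -> exists m1 m2 : nat,
      [/\ is_f N N./2.+1 m1, is_f N N./2 m2 & m2 < m1]).
Proof.
have hN2 : N = 2 * N./2 by have := odd_double_half N; rewrite (negbTE hN) -mul2n.
set k := N./2 in hN2 *.
have hsq : N ^ 2 %/ 4 = k ^ 2.
  by rewrite hN2 expnMn (_ : 2 ^ 2 = 4) // mulKn.
rewrite hsq.
have part1 : 3 <= k -> is_f N k (k ^ 2 + 3).
  move=> hk; split; first by rewrite hN2; exact: graph1.
  by move=> T e; rewrite hN2; exact: upper.
split; first by move=> h6; apply: part1; lia.
move=> h10.
have hk : 5 <= k by lia.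
have [T [e [he hlt]]] := graph2 hk.
have [m1 hm1] : exists m, is_f N k.+1 m by apply: is_f_exists; rewrite hN2; exists T, e.
exists m1, (k ^ 2 + 3); split => //; first by apply: part1; lia.
apply: (leq_trans hlt); case: hm1 => _ hup; apply: hup; by rewrite hN2.
Qed.
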